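(* Let $\delta:\mathbb{R}\to\mathbb{R}$ be a posterior median function $x\mapsto\delta(x;w,b,c)$ for fixed $(w,b,c)$, and assume it is continuous and that there exist $t_1,t_2>0$ such that $\delta(x)=0$ if and only if $-t_2\le x\le t_1$, $\delta$ is strictly increasing on $(t_1,\infty)$ and on $(-\infty,-t_2)$, and $\delta$ maps $(t_1,\infty)$ onto $(0,\infty)$ and $(-\infty,-t_2)$ onto $(-\infty,0)$. Let $\delta^{-1}(t)$ for $t\ne0$ denote the inverse of $\delta$ restricted to $(t_1,\infty)\cup(-\infty,-t_2)$, and define the penalty $$\mathcal{P}(\theta)=\int_0^{\theta}\bigl(\delta^{-1}(t)-t\bigr)\,dt\ \ (\theta\ne0),\qquad \mathcal{P}(0)=0.$$ Then for every $x\in\mathbb{R}$, the minimizer of $\theta\mapsto\frac12(x-\theta)^2+\mathcal{P}(\theta)$ over $\theta\in\mathbb{R}$ is $\theta=\delta(x)$.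
   Context: Setting: $X\mid\mu\sim N(\mu,1)$ with prior $\mu\sim(1-w)\delta_0+w\,\gamma(\cdot;b,c)$, $\delta_0$ the point mass at $0$ and $\gamma(\cdot;b,c)$ a location-scale density with scale $b>0$ and location $c$; $\delta(x;w,b,c)$ is the posterior median of $\mu$ given $X=x$. The integral $\int_0^\theta$ for $\theta<0$ means $-\int_\theta^0$. *)

(* Defs.v *)
From Stdlib Require Import Reals Lra ClassicalEpsilon.
Open Scope R_scope.

(* Oriented Riemann integral \int_a^b f as a total function:
   the (proof-independent) Stdlib RiemannInt when f is Riemann integrable
   on [a,b] (Stdlib's RiemannInt is oriented, so for b < a it equals
   - \int_b^a f), and 0 otherwise (never used in the theorem, where the
   integrand is integrable). *)
Definition RInt (f : R -> R) (a b : R) : R :=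
  match excluded_middle_informative (inhabited (Riemann_integrable f a b)) with
  | left H => RiemannInt (epsilon H (fun _ => True))
  | right _ => 0
  end.

Definition is_restricted_inverse (delta dinv : R -> R) (t1 t2 : R) : Prop :=
  (forall t, 0 < t -> t1 < dinv t /\ delta (dinv t) = t) /\
  (forall t, t < 0 -> dinv t < - t2 /\ delta (dinv t) = t).

Definition penalty (dinv : R -> R) (theta : R) : R :=
  if Req_EM_T theta 0 then 0 else RInt (fun t => dinv t - t) 0 theta.

(* Main.v *)
Require Import Defs.
From Stdlib Require Import Reals Lra.
From Coquelicot Require Import Coquelicot.
Open Scope R_scope.

Lemma mono_inv (delta : R -> R) (t1 : R) :
  (forall x y, t1 < x -> x < y -> delta x < delta y) ->
  forall u v, t1 < u -> t1 < v -> delta u < delta v -> u < v.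
Proof.
  intros H u v Hu Hv Hd. destruct (Rlt_le_dec u v) as [h|h]; auto.
  destruct (Req_dec u v) as [e|e]. subst; lra.
  assert (delta v < delta u) by (apply H; lra). lra.
Qed.

Lemma mono_inv_neg (delta : R -> R) (t2 : R) :
  (forall x y, x < y -> y < - t2 -> delta x < delta y) ->
  forall u v, u < - t2 -> v < - t2 -> delta u < delta v -> u < v.
Proof.
  intros H u v Hu Hv Hd. destruct (Rlt_le_dec u v) as [h|h]; auto.
  destruct (Req_dec u v) as [e|e]. subst; lra.
  assert (delta v < delta u) by (apply H; lra). lra.
Qed.

Definition hp (dinv : R -> R) (t1 t : R) := if Rlt_dec 0 t then dinv t else t1.
Definition hm (dinv : R -> R) (t2 t : R) := if Rlt_dec t 0 then dinv t else - t2.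

Lemma hp_cont (delta dinv : R -> R) (t1 t2 : R) :
  0 < t1 ->
  (forall x y, t1 < x -> x < y -> delta x < delta y) ->
  (forall x, t1 < x -> 0 < delta x) ->
  is_restricted_inverse delta dinv t1 t2 ->
  forall t0, continuity_pt (hp dinv t1) t0.
Proof.
  intros Ht1 Hmono Hpos [Hinv _] t0.
  pose proof (mono_inv delta t1 Hmono) as MI.
  unfold continuity_pt, continue_in, limit1_in, limit_in; simpl; unfold R_dist.
  intros eps Heps.
  destruct (Rtotal_order t0 0) as [Hn|[Hz|Hp]].
  - exists (- t0); split; [lra|]. intros t [_ Ht].
    unfold hp. destruct (Rlt_dec 0 t); [apply Rabs_def2 in Ht; lra|].
    destruct (Rlt_dec 0 t0); [lra|]. rewrite Rminus_diag, Rabs_R0; lra.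
  - subst t0. set (x' := t1 + eps/2).
    assert (Hd : 0 < delta x') by (apply Hpos; unfold x'; lra).
    exists (delta x'); split; [lra|]. intros t [_ Ht].
    rewrite Rminus_0_r in Ht.
    unfold hp. destruct (Rlt_dec 0 0); [lra|].
    destruct (Rlt_dec 0 t) as [Htp|Htp].
    + destruct (Hinv t Htp) as [A B].
      assert (dinv t < x').
      { apply MI; [lra|unfold x'; lra|]. rewrite B. apply Rabs_def2 in Ht; lra. }
      apply Rabs_def1; unfold x' in *; lra.
    + rewrite Rminus_diag, Rabs_R0; lra.
  - destruct (Hinv t0 Hp) as [A B].
    set (x0 := dinv t0) in *.
    set (e := Rmin eps (x0 - t1) / 2).
    assert (He : 0 < e /\ e <= eps/2 /\ e <= (x0 - t1)/2).
    { unfold e; split; [apply Rmin_case; lra|].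
      split; [apply Rmult_le_compat_r; [lra| apply Rmin_l]|apply Rmult_le_compat_r; [lra|apply Rmin_r]]. }
    assert (Hlo : 0 < delta (x0 - e)) by (apply Hpos; lra).
    assert (Hlo2 : delta (x0 - e) < t0) by (rewrite <- B; apply Hmono; lra).
    assert (Hhi : t0 < delta (x0 + e)) by (rewrite <- B at 1; apply Hmono; lra).
    exists (Rmin (t0 - delta (x0 - e)) (delta (x0 + e) - t0)).
    split; [apply Rmin_case; lra|].
    intros t [_ Ht]. apply Rabs_def2 in Ht.
    destruct Ht as [Ht1' Ht2'].
    assert (Hr := Rmin_l (t0 - delta (x0 - e)) (delta (x0 + e) - t0)).
    assert (Hr2 := Rmin_r (t0 - delta (x0 - e)) (delta (x0 + e) - t0)).
    assert (Htp : 0 < t) by lra.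
    unfold hp. destruct (Rlt_dec 0 t); [|lra]. destruct (Rlt_dec 0 t0); [|lra].
    destruct (Hinv t Htp) as [C D].
    assert (x0 - e < dinv t) by (apply MI; [lra|lra|rewrite D; lra]).
    assert (dinv t < x0 + e) by (apply MI; [lra|lra|rewrite D; lra]).
    apply Rabs_def1; fold x0; lra.
Qed.

Lemma hm_cont (delta dinv : R -> R) (t1 t2 : R) :
  0 < t2 ->
  (forall x y, x < y -> y < - t2 -> delta x < delta y) ->
  (forall x, x < - t2 -> delta x < 0) ->
  is_restricted_inverse delta dinv t1 t2 ->
  forall t0, continuity_pt (hm dinv t2) t0.
Proof.
  intros Ht2 Hmono Hneg [_ Hinv] t0.
  pose proof (mono_inv_neg delta t2 Hmono) as MI.
  unfold continuity_pt, continue_in, limit1_in, limit_in; simpl; unfold R_dist.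
  intros eps Heps.
  destruct (Rtotal_order t0 0) as [Hn|[Hz|Hp]].
  2:{ subst t0. set (x' := - t2 - eps/2).
    assert (Hd : delta x' < 0) by (apply Hneg; unfold x'; lra).
    exists (- delta x'); split; [lra|]. intros t [_ Ht].
    rewrite Rminus_0_r in Ht.
    unfold hm. destruct (Rlt_dec 0 0); [lra|].
    destruct (Rlt_dec t 0) as [Htp|Htp].
    + destruct (Hinv t Htp) as [A B].
      assert (x' < dinv t).
      { apply MI; [unfold x'; lra|lra|]. rewrite B. apply Rabs_def2 in Ht; lra. }
      apply Rabs_def1; unfold x' in *; lra.
    + rewrite Rminus_diag, Rabs_R0; lra. }
  2:{ exists t0; split; [lra|]. intros t [_ Ht].
    unfold hm. destruct (Rlt_dec t 0); [apply Rabs_def2 in Ht; lra|].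
    destruct (Rlt_dec t0 0); [lra|]. rewrite Rminus_diag, Rabs_R0; lra. }
  destruct (Hinv t0 Hn) as [A B].
  set (x0 := dinv t0) in *.
  set (e := Rmin eps (- t2 - x0) / 2).
  assert (He : 0 < e /\ e <= eps/2 /\ e <= (- t2 - x0)/2).
  { unfold e; split; [apply Rmin_case; lra|].
    split; [apply Rmult_le_compat_r; [lra| apply Rmin_l]|apply Rmult_le_compat_r; [lra|apply Rmin_r]]. }
  assert (Hhi0 : delta (x0 + e) < 0) by (apply Hneg; lra).
  assert (Hlo2 : delta (x0 - e) < t0) by (rewrite <- B; apply Hmono; lra).
  assert (Hhi : t0 < delta (x0 + e)) by (rewrite <- B at 1; apply Hmono; lra).
  exists (Rmin (t0 - delta (x0 - e)) (delta (x0 + e) - t0)).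
  split; [apply Rmin_case; lra|].
  intros t [_ Ht]. apply Rabs_def2 in Ht.
  destruct Ht as [Ht1' Ht2'].
  assert (Hr := Rmin_l (t0 - delta (x0 - e)) (delta (x0 + e) - t0)).
  assert (Hr2 := Rmin_r (t0 - delta (x0 - e)) (delta (x0 + e) - t0)).
  assert (Htp : t < 0) by lra.
  unfold hm. destruct (Rlt_dec t 0); [|lra]. destruct (Rlt_dec t0 0); [|lra].
  destruct (Hinv t Htp) as [C D].
  assert (x0 - e < dinv t) by (apply MI; [lra|lra|rewrite D; lra]).
  assert (dinv t < x0 + e) by (apply MI; [lra|lra|rewrite D; lra]).
  apply Rabs_def1; fold x0; lra.
Qed.

Lemma cont_of (f : R -> R) x : continuity_pt f x -> continuous f x.
Proof. intro H. now apply continuity_pt_filterlim. Qed.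

Lemma defs_RInt (f : R -> R) a b : ex_RInt f a b -> Defs.RInt f a b = RInt f a b.
Proof.
  intro H. unfold Defs.RInt.
  match goal with |- context [match ?m with _ => _ end] => destruct m as [i|n] end.
  - symmetry. apply RInt_Reals.
  - exfalso. apply n. constructor. now apply ex_RInt_Reals_0.
Qed.

Lemma int_pos (f : R -> R) u v : u < v -> (forall t, continuity_pt f t) ->
  (forall t, u < t < v -> 0 < f t) -> 0 < RInt f u v.
Proof.
  intros H C P.
  replace 0 with (RInt (fun _ => 0) u v).
  - apply RInt_lt; auto. intros; now apply cont_of. intros; apply continuous_const.
  - rewrite RInt_const. unfold scal; simpl; unfold mult; simpl; ring.
Qed.

Lemma int_neg (f : R -> R) u v : u < v -> (forall t, continuity_pt f t) ->
  (forall t, u < t < v -> f t < 0) -> RInt f u v < 0.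
Proof.
  intros H C P.
  replace 0 with (RInt (fun _ => 0) u v).
  - apply RInt_lt; auto. intros; apply continuous_const. intros; now apply cont_of.
  - rewrite RInt_const. unfold scal; simpl; unfold mult; simpl; ring.
Qed.

Lemma F_repr (g dinv : R -> R) (x theta : R) :
  (forall t, continuity_pt g t) ->
  (forall t, Rmin 0 theta < t < Rmax 0 theta -> g t = dinv t) ->
  theta <> 0 ->
  / 2 * (x - theta) ^ 2 + penalty dinv theta =
  / 2 * x ^ 2 + RInt (fun t => g t - x) 0 theta.
Proof.
  intros C E Hn. unfold penalty. destruct (Req_EM_T theta 0); [contradiction|].
  assert (Cg : forall t, continuity_pt (fun t => g t - t) t).
  { intro; apply continuity_pt_minus; auto. apply continuity_pt_id. }
  assert (Ex : ex_RInt (fun t => g t - t) 0 theta).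
  { apply (ex_RInt_continuous (V:=R_CompleteNormedModule)). intros; now apply cont_of. }
  rewrite defs_RInt.
  2:{ eapply ex_RInt_ext; [|exact Ex]. intros t Ht; simpl; now rewrite E. }
  rewrite (RInt_ext (fun t => dinv t - t) (fun t => g t - t)).
  2:{ intros t Ht; now rewrite E. }
  assert (Ex2 : ex_RInt (fun t => g t - x) 0 theta).
  { apply (ex_RInt_continuous (V:=R_CompleteNormedModule)). intros; apply cont_of.
    apply continuity_pt_minus; auto. apply continuity_pt_const; intros ? ?; auto. }
  assert (Ix : is_RInt (fun t => x - t) 0 theta
     (minus ((fun t => x * t - t^2/2) theta) ((fun t => x * t - t^2/2) 0))).
  { apply (is_RInt_derive (V:=R_CompleteNormedModule) (fun t => x * t - t^2/2) (fun t => x - t)).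
    - intros; auto_derive; auto. field.
    - intros; apply cont_of. apply continuity_pt_minus.
      apply continuity_pt_const; intros ? ?; auto. apply continuity_pt_id. }
  rewrite (RInt_ext (fun t => g t - t) (fun t => plus (g t - x) (x - t))).
  2:{ intros; unfold plus; simpl; ring. }
  rewrite (RInt_plus (V:=R_CompleteNormedModule)); auto. 2:{ eexists; exact Ix. }
  replace (RInt (Rminus x) 0 theta) with (x*theta - theta^2/2).
  { unfold plus; simpl. field. }
  symmetry. pose proof (is_RInt_unique (V:=R_CompleteNormedModule) _ _ _ _ Ix) as U.
  change (RInt (Rminus x) 0 theta) with (RInt (fun t => x - t) 0 theta).
  rewrite U. unfold minus, plus, opp; simpl. field.
Qed.

Lemma chas (g : R -> R) a b c : (forall t, continuity_pt g t) ->
  RInt g a c = RInt g a b + RInt g b c.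
Proof.
  intro C. symmetry.
  assert (E : forall u v, ex_RInt g u v).
  { intros; apply (ex_RInt_continuous (V:=R_CompleteNormedModule)). intros; now apply cont_of. }
  exact (RInt_Chasles (V:=R_CompleteNormedModule) g a b c (E a b) (E b c)).
Qed.

Lemma pt0 (g : R -> R) a : RInt g a a = 0.
Proof. exact (RInt_point (V:=R_CompleteNormedModule) a g). Qed.

Lemma key (Fv : R -> R) a :
  (forall th, th <> a -> Fv a < Fv th) ->
  (forall theta, Fv a <= Fv theta) /\ (forall theta, Fv theta <= Fv a -> theta = a).
Proof.
  intro H; split.
  - intro th. destruct (Req_dec th a); [subst; lra|]. apply Rlt_le, H; auto.
  - intros th Hle. destruct (Req_dec th a); auto. specialize (H th H0). lra.
Qed.

Theorem mainTheorem6 (delta : R -> R) (t1 t2 : R) :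
  0 < t1 -> 0 < t2 ->
  continuity delta ->
  (forall x, delta x = 0 <-> - t2 <= x <= t1) ->
  (forall x y, t1 < x -> x < y -> delta x < delta y) ->
  (forall x y, x < y -> y < - t2 -> delta x < delta y) ->
  (forall x, t1 < x -> 0 < delta x) ->
  (forall y, 0 < y -> exists x, t1 < x /\ delta x = y) ->
  (forall x, x < - t2 -> delta x < 0) ->
  (forall y, y < 0 -> exists x, x < - t2 /\ delta x = y) ->
  forall dinv : R -> R,
  is_restricted_inverse delta dinv t1 t2 ->
  forall x : R,
    (forall theta : R,
       / 2 * (x - delta x) ^ 2 + penalty dinv (delta x)
       <= / 2 * (x - theta) ^ 2 + penalty dinv theta) /\
    (forall theta : R,
       / 2 * (x - theta) ^ 2 + penalty dinv theta
       <= / 2 * (x - delta x) ^ 2 + penalty dinv (delta x) ->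
       theta = delta x).
Proof.
  intros Ht1 Ht2 Cd Hz Mp Mn Pp Sp Nn Sn dinv Hinv x.
  pose proof (mono_inv delta t1 Mp) as MIp.
  pose proof (mono_inv_neg delta t2 Mn) as MIn.
  destruct Hinv as [Ip In] eqn:HI.
  set (gp := fun t => hp dinv t1 t - x).
  set (gm := fun t => hm dinv t2 t - x).
  assert (CP : forall t, continuity_pt gp t).
  { intro; unfold gp; apply continuity_pt_minus.
    eapply hp_cont; eauto. apply continuity_pt_const; intros ? ?; auto. }
  assert (CM : forall t, continuity_pt gm t).
  { intro; unfold gm; apply continuity_pt_minus.
    eapply hm_cont; eauto. apply continuity_pt_const; intros ? ?; auto. }
  set (Fv := fun th => / 2 * (x - th) ^ 2 + penalty dinv th).
  assert (Fpos : forall th, 0 < th -> Fv th = / 2 * x ^ 2 + RInt gp 0 th).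
  { intros th Hth. unfold Fv, gp. apply F_repr.
    - intro; eapply hp_cont; eauto.
    - intros t Ht. rewrite Rmin_left, Rmax_right in Ht by lra.
      unfold hp. destruct (Rlt_dec 0 t); auto; lra.
    - lra. }
  assert (Fneg : forall th, th < 0 -> Fv th = / 2 * x ^ 2 + RInt gm 0 th).
  { intros th Hth. unfold Fv, gm. apply F_repr.
    - intro; eapply hm_cont; eauto.
    - intros t Ht. rewrite Rmin_right, Rmax_left in Ht by lra.
      unfold hm. destruct (Rlt_dec t 0); auto; lra.
    - lra. }
  assert (F0 : Fv 0 = / 2 * x ^ 2).
  { unfold Fv, penalty. destruct (Req_EM_T 0 0); [|congruence]. ring. }
  assert (HPT := pt0 gm). assert (HPT' := pt0 gp).
  change (forall theta, Fv (delta x) <= Fv theta) with (forall theta, Fv (delta x) <= Fv theta).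
  change ((forall theta : R, Fv (delta x) <= Fv theta) /\
    (forall theta : R, Fv theta <= Fv (delta x) -> theta = delta x)).
  apply key.
  destruct (Rlt_le_dec t1 x) as [Hx|Hx].
  -
    set (a := delta x). assert (Ha : 0 < a) by (apply Pp; auto).
    assert (Gl : forall t, t < a -> gp t < 0).
    { intros t Ht. unfold gp, hp. destruct (Rlt_dec 0 t); [|lra].
      destruct (Ip t r) as [A B]. assert (dinv t < x) by (apply MIp; auto; rewrite B; auto). lra. }
    assert (Gr : forall t, a < t -> 0 < gp t).
    { intros t Ht. unfold gp, hp. destruct (Rlt_dec 0 t); [|lra].
      destruct (Ip t r) as [A B]. assert (x < dinv t) by (apply MIp; auto; rewrite B; auto). lra. }
    assert (Gm : forall t, gm t < 0).
    { intros t. unfold gm, hm. destruct (Rlt_dec t 0); [|lra].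
      destruct (In t r) as [A B]. lra. }
    assert (Ka : RInt gp 0 a < 0) by (apply int_neg; auto; intros; apply Gl; lra).
    rewrite (Fpos a Ha).
    intros th Hth.
    destruct (Rtotal_order th 0) as [Hn|[Hz0|Hp]].
    + rewrite (Fneg th Hn).
      assert (RInt gm th 0 < 0) by (apply int_neg; auto).
      assert (E := chas gm 0 th 0 CM). rewrite pt0 in E. lra.
    + subst th. rewrite F0. lra.
    + rewrite (Fpos th Hp).
      destruct (Rlt_le_dec a th).
      * assert (0 < RInt gp a th) by (apply int_pos; auto; intros; apply Gr; lra).
        rewrite (chas gp 0 a th CP). lra.
      * assert (th < a) by lra.
        assert (RInt gp th a < 0) by (apply int_neg; auto; intros; apply Gl; lra).
        rewrite (chas gp 0 th a CP). lra.
  - destruct (Rle_lt_dec (- t2) x) as [Hx2|Hx2].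
    + assert (Hd : delta x = 0) by (apply Hz; lra). rewrite Hd, F0.
      intros th Hth.
      destruct (Rtotal_order th 0) as [Hn|[Hz0|Hp]].
      * rewrite (Fneg th Hn).
        assert (RInt gm th 0 < 0).
        { apply int_neg; auto. intros t Ht. unfold gm, hm. destruct (Rlt_dec t 0); [|lra].
          destruct (In t r) as [A B]. lra. }
        assert (E := chas gm 0 th 0 CM). rewrite pt0 in E. lra.
      * contradiction.
      * rewrite (Fpos th Hp).
        assert (0 < RInt gp 0 th).
        { apply int_pos; auto. intros t Ht. unfold gp, hp. destruct (Rlt_dec 0 t); [|lra].
          destruct (Ip t r) as [A B]. lra. }
        lra.
    + set (a := delta x). assert (Ha : a < 0) by (apply Nn; auto).
      assert (Gl : forall t, t < a -> gm t < 0).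
      { intros t Ht. unfold gm, hm. destruct (Rlt_dec t 0); [|lra].
        destruct (In t r) as [A B]. assert (dinv t < x) by (apply MIn; auto; rewrite B; auto). lra. }
      assert (Gr : forall t, a < t -> 0 < gm t).
      { intros t Ht. unfold gm, hm. destruct (Rlt_dec t 0); [|lra].
        destruct (In t r) as [A B]. assert (x < dinv t) by (apply MIn; auto; rewrite B; auto). lra. }
      assert (Gp : forall t, 0 < gp t).
      { intros t. unfold gp, hp. destruct (Rlt_dec 0 t); [|lra].
        destruct (Ip t r) as [A B]. lra. }
      assert (Ka : 0 < RInt gm a 0) by (apply int_pos; auto; intros; apply Gr; lra).
      assert (E0 := chas gm 0 a 0 CM). rewrite pt0 in E0.
      rewrite (Fneg a Ha).
      intros th Hth.
      destruct (Rtotal_order th 0) as [Hn|[Hz0|Hp]].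
      * rewrite (Fneg th Hn).
        destruct (Rlt_le_dec th a).
        -- assert (RInt gm th a < 0) by (apply int_neg; auto; intros; apply Gl; lra).
           assert (E := chas gm 0 a th CM). assert (E2 := chas gm a th a CM).
           rewrite pt0 in E2. lra.
        -- assert (a < th) by lra.
           assert (0 < RInt gm a th) by (apply int_pos; auto; intros; apply Gr; lra).
           assert (E := chas gm 0 th a CM). assert (E2 := chas gm a th a CM).
           rewrite pt0 in E2. lra.
      * subst th. rewrite F0. lra.
      * rewrite (Fpos th Hp).
        assert (0 < RInt gp 0 th) by (apply int_pos; auto).
        lra.
Qed.
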